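(* There exists a shift space $X''$ (over a finite alphabet) such that $(X'',\sigma)$ is $\mathrm{Per}(\sigma|_{X''})$-closeable but $\mathrm{Per}(\sigma|_{X''})$ is not linkable.
   Context: A shift space is a closed $\sigma$-invariant subset of $\mathcal A^{\mathbb N}$, $\mathcal A$ a finite alphabet, with metric $\rho(x,y)=2^{-\min\{k:x_k\ne y_k\}}$ and shift $\sigma$. $\mathcal E(x,n)=\frac1n\sum_{j<n}\delta_{\sigma^jx}$; $x$ is generic for $\mu$ if $\mathcal E(x,n)\to\mu$. $B(x,n,\varepsilon)=\{y:\rho(\sigma^jy,\sigma^jx)<\varepsilon,\ 0\le j<n\}$. A point $x$ is $K$-closeable if for every $\varepsilon>0$, $N>0$ there exist integers $N\le p\le q\le(1+\varepsilon)p$ and $y\in B(x,p,\varepsilon)\cap K$ with $\sigma^qy=y$; the system is $K$-closeable if every ergodic measure has a $K$-closeable generic point. A set $K$ of periodic points is linkable if for all $y_1,y_2\in K$, $\varepsilon>0$, $\lambda\in[0,1]$ there exist $p_1,p_2,q_1,q_2\in\mathbb N$ and $z\in K$ with: $\sigma^{q_2}z=z$; $\lambda-\varepsilon\le\frac{p_1}{p_1+p_2}\le\lambda+\varepsilon$; $p_1\le q_1\le(1+\varepsilon)p_1$ and $z\in B(y_1,p_1,\varepsilon)$; $p_2\le q_2-q_1\le(1+\varepsilon)p_2$ and $\sigma^{q_1}z\in B(y_2,p_2,\varepsilon)$. *)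

(* Defs.v *)
From Stdlib Require Import Reals Lra Lia Arith List Classical ClassicalEpsilon.
Import ListNotations.
Open Scope R_scope.

(* Alphabet: {0, ..., a-1}; points of A^N are sequences nat -> nat. *)
Definition seqn := nat -> nat.

Definition in_full_shift (a : nat) (x : seqn) : Prop := forall k, (x k < a)%nat.

Definition shift (x : seqn) : seqn := fun k => x (S k).
Definition shiftn (j : nat) (x : seqn) : seqn := fun k => x (j + k)%nat.

Definition first_diff (x y : seqn) : nat :=
  epsilon (inhabits 0%nat)
    (fun k => x k <> y k /\ forall j, (j < k)%nat -> x j = y j).

Definition rho (x y : seqn) : R :=
  if excluded_middle_informative (forall k, x k = y k) then 0
  else / (2 ^ first_diff x y).

Definition is_closed (X : seqn -> Prop) : Prop :=
  forall x, (forall n, exists y, X y /\ forall i, (i < n)%nat -> y i = x i) -> X x.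

Definition shift_space (a : nat) (X : seqn -> Prop) : Prop :=
  (forall x, X x -> in_full_shift a x) /\ is_closed X /\
  (forall x, X x -> X (shift x)).

Definition bowen_ball (x : seqn) (n : nat) (eps : R) (y : seqn) : Prop :=
  forall j, (j < n)%nat -> rho (shiftn j y) (shiftn j x) < eps.

Definition Per (X : seqn -> Prop) (y : seqn) : Prop :=
  X y /\ exists q, (q >= 1)%nat /\ shiftn q y = y.

(* ---- Invariant Borel probability measures, via cylinder weights ----
   A Borel probability measure on A^N is uniquely determined by its values on
   cylinders [w] = {x : x_i = w_i, i < |w|}, and any nonnegative normalised
   Kolmogorov-consistent family of such values extends uniquely.
   m w stands for mu([w]). *)
Definition sum_letters (a : nat) (f : nat -> R) : R :=
  fold_right Rplus 0 (map f (seq 0 a)).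

Fixpoint in_cylb (w : list nat) (x : seqn) : bool :=
  match w with
  | [] => true
  | c :: w' => Nat.eqb (x 0%nat) c && in_cylb w' (shift x)
  end.

Definition in_cyl (w : list nat) (x : seqn) : Prop := in_cylb w x = true.

(* mu is a sigma-invariant Borel probability measure on A^N with mu(X) = 1
   (as X is closed, mu(X)=1 iff mu([w]) = 0 for every cylinder missing X). *)
Definition inv_measure (a : nat) (X : seqn -> Prop) (m : list nat -> R) : Prop :=
  m [] = 1 /\
  (forall w, 0 <= m w) /\
  (forall w, m w = sum_letters a (fun c => m (w ++ [c]))) /\
  (forall w, m w = sum_letters a (fun c => m (c :: w))) /\
  (forall w, (forall x, X x -> ~ in_cyl w x) -> m w = 0).

Definition ergodic (a : nat) (X : seqn -> Prop) (m : list nat -> R) : Prop :=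
  inv_measure a X m /\
  forall m1 m2 t, inv_measure a X m1 -> inv_measure a X m2 -> 0 < t < 1 ->
    (forall w, m w = t * m1 w + (1 - t) * m2 w) ->
    (forall w, m1 w = m w) /\ (forall w, m2 w = m w).

Definition emp_cyl (x : seqn) (n : nat) (w : list nat) : R :=
  INR (length (filter (fun j => in_cylb w (shiftn j x)) (seq 0 n))) / INR n.

(* x generic for mu: E(x,n) -> mu weak-*, equivalently on all cylinders
   (cylinder indicators are continuous and span a dense subspace of C(A^N)). *)
Definition generic (x : seqn) (m : list nat -> R) : Prop :=
  forall w, Un_cv (fun n => emp_cyl x (S n) w) (m w).

Definition closeable_point (K : seqn -> Prop) (x : seqn) : Prop :=
  forall eps N, eps > 0 -> (N > 0)%nat ->
    exists p q y, (N <= p)%nat /\ (p <= q)%nat /\ INR q <= (1 + eps) * INR p /\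
      bowen_ball x p eps y /\ K y /\ shiftn q y = y.

Definition closeable_system (a : nat) (X : seqn -> Prop) (K : seqn -> Prop) : Prop :=
  forall m, ergodic a X m -> exists x, X x /\ generic x m /\ closeable_point K x.

Definition linkable (K : seqn -> Prop) : Prop :=
  forall y1 y2 eps lam, K y1 -> K y2 -> eps > 0 -> 0 <= lam <= 1 ->
    exists p1 p2 q1 q2 z,
      (p1 >= 1)%nat /\ (p2 >= 1)%nat /\ (q1 >= 1)%nat /\ (q2 >= 1)%nat /\
      K z /\ shiftn q2 z = z /\
      lam - eps <= INR p1 / INR (p1 + p2) <= lam + eps /\
      (p1 <= q1)%nat /\ INR q1 <= (1 + eps) * INR p1 /\ bowen_ball y1 p1 eps z /\
      (p2 <= q2 - q1)%nat /\ INR (q2 - q1) <= (1 + eps) * INR p2 /\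
      (q1 <= q2)%nat /\
      bowen_ball y2 p2 eps (shiftn q1 z).

(* Main.v *)
Require Import Defs.
From Stdlib Require Import Reals Lra Lia Arith List Classical ClassicalEpsilon.
Import ListNotations.
Open Scope R_scope.

Definition X2 (y : seqn) : Prop := (forall k, y k = 0%nat) \/ (forall k, y k = 1%nat).

Lemma in_cylb_cst w c : in_cylb w (fun _ => c) = forallb (Nat.eqb c) w.
Proof. induction w as [|d w IH]; simpl; [reflexivity|]. unfold shift. rewrite IH. reflexivity. Qed.

Lemma sum2 f : sum_letters 2 f = f 0%nat + (f 1%nat + 0).
Proof. reflexivity. Qed.

Lemma cyl_const w y c : in_cylb w y = true -> (forall k, y k = c) -> w = repeat c (length w).
Proof.
  revert y; induction w as [|d w IH]; intros y H Hc; simpl in *; auto.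
  apply andb_prop in H as [H1 H2]. apply Nat.eqb_eq in H1. rewrite Hc in H1. subst.
  f_equal. apply (IH (shift y)); auto. intros k; apply Hc.
Qed.

Definition mc (c : nat) (w : list nat) : R := if in_cylb w (fun _ => c) then 1 else 0.

Lemma mc_inv c : (c < 2)%nat -> inv_measure 2 X2 (mc c).
Proof.
  intros Hc. unfold mc. repeat split.
  - intros w; destruct in_cylb; lra.
  - intros w. rewrite sum2, !in_cylb_cst, !forallb_app. simpl.
    destruct (forallb (Nat.eqb c) w); simpl; destruct c as [|[|c]]; simpl; try lra; lia.
  - intros w. rewrite sum2, !in_cylb_cst. simpl.
    destruct (forallb (Nat.eqb c) w); simpl; destruct c as [|[|c]]; simpl; try lra; lia.
  - intros w H. destruct (in_cylb w (fun _ => c)) eqn:E; auto.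
    exfalso. apply (H (fun _ => c)); auto.
    destruct c as [|[|c]]; [left|right|lia]; auto.
Qed.

Lemma miss w : (exists c, (c < 2)%nat /\ (exists n, w = repeat c (S n))) \/ w = [] \/
   (forall x, X2 x -> ~ in_cyl w x).
Proof.
  destruct (classic (exists x, X2 x /\ in_cyl w x)) as [[x [Hx Hw]]|H].
  - destruct w as [|d w']; [right; left; reflexivity|]. left.
    destruct Hx as [Hx|Hx]; [exists 0%nat|exists 1%nat]; split; try lia;
      exists (length w'); exact (cyl_const _ _ _ Hw Hx).
  - right; right. intros x Hx Hw. apply H; eauto.
Qed.

Lemma rep_m m c n : inv_measure 2 X2 m -> (c < 2)%nat -> m (repeat c (S n)) = m [c].
Proof.
  intros (H0 & Hnn & Hr & Hl & Hz) Hc. induction n as [|n IH]; [reflexivity|].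
  rewrite <- IH. rewrite (Hl (repeat c (S n))), sum2.
  assert (forall d, d <> c -> (d < 2)%nat -> m (d :: repeat c (S n)) = 0) as Hd.
  { intros d Hdc Hd2. apply Hz. intros x Hx Hw. unfold in_cyl in Hw. simpl in Hw.
    apply andb_prop in Hw as [H1 H2]. apply andb_prop in H2 as [H3 _].
    apply Nat.eqb_eq in H1. apply Nat.eqb_eq in H3. unfold shift in H3.
    destruct Hx as [Hx|Hx]; rewrite !Hx in *; lia. }
  destruct c as [|[|c]]; [| |lia].
  - rewrite (Hd 1%nat) by lia. simpl; lra.
  - rewrite (Hd 0%nat) by lia. simpl; lra.
Qed.

Lemma forallb_rep c n : forallb (Nat.eqb c) (repeat c n) = true.
Proof. induction n; simpl; auto. rewrite Nat.eqb_refl; auto. Qed.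

Lemma formula m : inv_measure 2 X2 m ->
  forall w, m w = m [0%nat] * mc 0 w + (1 - m [0%nat]) * mc 1 w.
Proof.
  intros Hm w. pose proof Hm as (H0 & Hnn & Hr & Hl & Hz).
  assert (E1 : m [1%nat] = 1 - m [0%nat]).
  { pose proof (Hl []) as E. rewrite sum2, H0 in E. lra. }
  destruct (miss w) as [[c [Hc [n ->]]]|[->|Hw]].
  - rewrite rep_m; auto. unfold mc. rewrite !in_cylb_cst.
    destruct c as [|[|c]]; [| |lia]; rewrite forallb_rep; simpl; lra.
  - unfold mc; simpl. rewrite H0. lra.
  - rewrite Hz; auto. unfold mc.
    replace (in_cylb w (fun _ => 0%nat)) with false.
    replace (in_cylb w (fun _ => 1%nat)) with false. lra.
    all: symmetry; apply Bool.not_true_is_false; intro E; eapply Hw; [|exact E]; unfold X2; auto.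
Qed.

Lemma rho_lt1 x y : rho x y < 1 -> x 0%nat = y 0%nat.
Proof.
  intros H. apply NNPP; intro Hne. unfold rho in H.
  destruct excluded_middle_informative as [Ha|Ha]; [apply Hne, Ha|].
  assert (first_diff x y = 0%nat).
  { unfold first_diff.
    destruct (epsilon_spec (inhabits 0%nat) (fun k => x k <> y k /\ forall j, (j < k)%nat -> x j = y j))
      as [_ Hk].
    { exists 0%nat; split; auto; intros; lia. }
    destruct (epsilon _ _) as [|k]; auto. exfalso; apply Hne, Hk; lia. }
  match goal with E : first_diff x y = 0%nat |- _ => rewrite E in H end.
  simpl in H. lra.
Qed.

Lemma rho_refl x : rho x x = 0.
Proof. unfold rho. destruct excluded_middle_informative as [_|n]; auto. exfalso; apply n; auto. Qed.

Lemma gen_cst c m : (forall w, m w = mc c w) -> generic (fun _ => c) m.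
Proof.
  intros Hm w. unfold emp_cyl.
  assert (E : forall n, INR (length (filter (fun j => in_cylb w (shiftn j (fun _ => c))) (seq 0 (S n))))
       / INR (S n) = mc c w).
  { intros n. unfold mc. unfold shiftn.
    assert (forall l, length (filter (fun _ : nat => in_cylb w (fun _ => c)) l) =
       if in_cylb w (fun _ => c) then length l else 0%nat) as L.
    { induction l; simpl; destruct (in_cylb w (fun _ => c)); simpl; auto. }
    rewrite L, length_seq. destruct in_cylb.
    - field. apply not_0_INR; lia.
    - simpl. unfold Rdiv. ring. }
  intros e He. exists 0%nat. intros n _. rewrite E, Hm. unfold R_dist.
  rewrite Rminus_diag, Rabs_R0. lra.
Qed.

Lemma close_cst c : (c < 2)%nat -> closeable_point (Per X2) (fun _ => c).
Proof.
  intros Hc eps N He HN. exists N, N, (fun _ => c). repeat split; auto.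
  - assert (0 <= INR N) by apply pos_INR. nra.
  - intros j _. unfold shiftn. rewrite rho_refl. lra.
  - destruct c as [|[|c]]; [left|right|lia]; auto.
  - exists 1%nat. split; auto.
Qed.

Theorem proposition9p2 :
  exists (a : nat) (X : seqn -> Prop),
    shift_space a X /\ closeable_system a X (Per X) /\ ~ linkable (Per X).
Proof.
  exists 2%nat, X2. split; [|split].
  - split; [|split].
    + intros x [H|H] k; rewrite H; lia.
    + intros x H.
      assert (Hk : forall k, x k = x 0%nat).
      { intros k. destruct (H (S k)) as [y [Hy Hxy]].
        rewrite <- (Hxy k), <- (Hxy 0%nat) by lia.
        destruct Hy as [Hy|Hy]; rewrite !Hy; auto. }
      destruct (H 1%nat) as [y [Hy Hxy]].
      rewrite <- (Hxy 0%nat) in Hk by lia.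
      destruct Hy as [Hy|Hy]; [left|right]; intros k; rewrite Hk; apply Hy.
    + intros x [H|H]; [left|right]; intros k; apply H.
  - intros m [Hm Herg].
    pose proof (formula m Hm) as F.
    pose proof Hm as (H0 & Hnn & Hr & Hl & Hz).
    assert (E1 : m [1%nat] = 1 - m [0%nat]).
    { pose proof (Hl []) as E. rewrite sum2, H0 in E. lra. }
    pose proof (Hnn [0%nat]). pose proof (Hnn [1%nat]).
    destruct (Req_dec (m [0%nat]) 1) as [T1|T1].
    + exists (fun _ => 0%nat). split; [left; auto|split].
      * apply gen_cst. intros w. rewrite F, T1. ring.
      * apply close_cst; lia.
    + destruct (Req_dec (m [0%nat]) 0) as [T0|T0].
      * exists (fun _ => 1%nat). split; [right; auto|split].
        -- apply gen_cst. intros w. rewrite F, T0. ring.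
        -- apply close_cst; lia.
      * exfalso. destruct (Herg (mc 0) (mc 1) (m [0%nat])) as [A _];
          try apply mc_inv; try lia; try lra; auto.
        specialize (A [0%nat]). unfold mc in A. simpl in A. lra.
  - intros HL.
    destruct (HL (fun _ => 0%nat) (fun _ => 1%nat) 1 0) as
      (p1 & p2 & q1 & q2 & z & Hp1 & Hp2 & Hq1 & Hq2 & [Xz _] & _ & _ & _ & _ & B1 & _ & _ & _ & B2);
      try lra.
    + split; [left|]; auto. exists 1%nat; split; auto.
    + split; [right|]; auto. exists 1%nat; split; auto.
    + specialize (B1 0%nat ltac:(lia)). specialize (B2 0%nat ltac:(lia)).
      apply rho_lt1 in B1. apply rho_lt1 in B2. unfold shiftn in B1, B2. simpl in B1, B2.
      destruct Xz as [Z|Z]; rewrite Z in B1, B2; lia.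
Qed.
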